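(* Let $p>1$ be an integer and let $u^{(p)}$ be the fixed point of the substitution $\varphi_p(L)=L^pS$, $\varphi_p(S)=M$, $\varphi_p(M)=L^{p-1}S$. Then $\mathrm{AC}(n)\ge 3$ for all $n\in\mathbb N$.
   Context: $u^{(p)}=\lim_{n\to\infty}\varphi_p^n(L)$. For a finite word $w$, its Parikh vector is $\Psi(w)=(|w|_L,|w|_S,|w|_M)$, where $|w|_a$ is the number of occurrences of $a$ in $w$. The Abelian complexity of $u^{(p)}$ is $\mathrm{AC}(n)=\#\{\Psi(w): w \text{ a factor of } u^{(p)} \text{ of length } n\}$. *)

(* Defs.v *)
From HB Require Import structures.
From mathcomp Require Import all_boot finmap.
From mathcomp Require Import boolp classical_sets cardinality.
Set Implicit Arguments. Unset Strict Implicit. Unset Printing Implicit Defensive.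

Inductive letter := L | S | M.

Definition letter_eqb (a b : letter) : bool :=
  match a, b with L, L | S, S | M, M => true | _, _ => false end.
Lemma letter_eqP : Equality.axiom letter_eqb.
Proof. by case; case; constructor. Qed.
HB.instance Definition _ := hasDecEq.Build letter letter_eqP.

Definition phi_letter (p : nat) (a : letter) : seq letter :=
  match a with
  | L => nseq p L ++ [:: S]
  | S => [:: M]
  | M => nseq p.-1 L ++ [:: S]
  end.

Definition phi (p : nat) (w : seq letter) : seq letter :=
  flatten (map (phi_letter p) w).

Definition phi_iter (p k : nat) : seq letter := iter k (phi p) [:: L].

(* The fixed point u^(p) = lim_k phi_p^k(L).  Since phi_p(L) starts with L,
   each phi_p^k(L) is a prefix of phi_p^(k+1)(L), and |phi_p^(i+1)(L)| > i,
   so the i-th letter of the limit is the i-th letter of phi_p^(i+1)(L). *)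
Definition u (p : nat) (i : nat) : letter := nth L (phi_iter p i.+1) i.

Definition factor (p i n : nat) : seq letter := [seq u p (i + k) | k <- iota 0 n].

Definition parikh (w : seq letter) : nat * nat * nat :=
  (count_mem L w, count_mem S w, count_mem M w).

Definition abelian_complexity (p n : nat) : nat :=
  #|` fset_set [set parikh (factor p i n) | i in [set: nat]] |.

(* Main.v *)
From Stdlib Require Import ZArith Lia Znumtheory.
Require Import Defs.
From mathcomp Require Import all_boot finmap.
From mathcomp Require Import boolp classical_sets cardinality.
From mathcomp Require Import zify.
Set Implicit Arguments. Unset Strict Implicit. Unset Printing Implicit Defensive.

Section Infra.
Variable p : nat.
Hypothesis hp : (1 < p)%N.

Lemma phi_cat s t : phi p (s ++ t) = phi p s ++ phi p t.
Proof. by rewrite /phi map_cat flatten_cat. Qed.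

Lemma phi_cons a s : phi p (a :: s) = phi_letter p a ++ phi p s.
Proof. by []. Qed.

Lemma phi_iterS k : phi_iter p k.+1 = phi p (phi_iter p k).
Proof. by rewrite /phi_iter iterS. Qed.

Lemma phi_iter_head k : exists r, phi_iter p k = L :: r.
Proof.
elim: k => [|k [r IH]]; first by exists [::].
rewrite phi_iterS IH phi_cons /=.
case: p hp => // q _; by eexists.
Qed.

Lemma phi_iter_prefix k : exists t, phi_iter p k.+1 = phi_iter p k ++ t.
Proof.
elim: k => [|k [t IH]].
  rewrite /phi_iter /= /phi /=. case: p hp => // q _ /=. by eexists.
by rewrite phi_iterS IH phi_cat -IH; eexists.
Qed.

Lemma phi_iter_prefix_le k k' : (k <= k')%N -> exists t, phi_iter p k' = phi_iter p k ++ t.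
Proof.
move=> /subnK <-; elim: (k' - k)%N => [|d [t IH]]; first by exists [::]; rewrite cats0.
have [t' ->] := phi_iter_prefix (d + k).
by rewrite IH -catA; eexists.
Qed.

Lemma size_phi_ge s : (size s <= size (phi p s))%N.
Proof.
elim: s => // a s IH; rewrite phi_cons size_cat /=.
case: a => /=; rewrite ?size_cat ?size_nseq /=; lia.
Qed.

Lemma size_phi_iter k : (k < size (phi_iter p k))%N.
Proof.
elim: k => [|k IH] //.
have [r E] := phi_iter_head k.
rewrite phi_iterS E phi_cons size_cat /= size_cat size_nseq /=.
have := size_phi_ge r; rewrite E /= in IH; lia.
Qed.

Lemma u_nth k i : (i < size (phi_iter p k))%N -> u p i = nth L (phi_iter p k) i.
Proof.
move=> hi; rewrite /u.
have [t1 E1] := phi_iter_prefix_le (leq_maxl k i.+1).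
have [t2 E2] := phi_iter_prefix_le (leq_maxr k i.+1).
have hi' : (i < size (phi_iter p i.+1))%N by apply: (leq_trans _ (size_phi_iter _)).
transitivity (nth L (phi_iter p (maxn k i.+1)) i).
  by rewrite E2 nth_cat hi'.
by rewrite E1 nth_cat hi.
Qed.

Lemma factor0_take k l : (l <= size (phi_iter p k))%N -> factor p 0 l = take l (phi_iter p k).
Proof.
move=> hl; apply: (@eq_from_nth _ L).
  by rewrite size_map size_iota size_take_min; lia.
move=> i; rewrite size_map size_iota => hi.
rewrite (nth_map 0%N) ?size_iota // nth_iota // add0n nth_take //.
apply: u_nth; lia.
Qed.

Lemma factor0_phi l : factor p 0 (size (phi p (factor p 0 l))) = phi p (factor p 0 l).
Proof.
have hl : (l <= size (phi_iter p l))%N by apply: ltnW; apply: size_phi_iter.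
rewrite (factor0_take hl).
set w := phi_iter p l.
have E : phi p w = phi p (take l w) ++ phi p (drop l w) by rewrite -phi_cat cat_take_drop.
rewrite (@factor0_take l.+1); last by rewrite phi_iterS E size_cat leq_addr.
by rewrite phi_iterS E take_size_cat.
Qed.

Lemma factor_split i a b : factor p i (a + b) = factor p i a ++ factor p (i + a) b.
Proof.
rewrite /factor iotaD map_cat add0n; congr (_ ++ _).
by rewrite -[a in iota a]addn0 iotaDl -map_comp; apply: eq_map => x /=; rewrite addnA.
Qed.

Lemma factor_slide i n : factor p i n.+1 = u p i :: factor p i.+1 n.
Proof.
rewrite -add1n factor_split /factor /= addn0; congr (_ :: _).
by apply: eq_map => x; rewrite addn1.
Qed.

Lemma factor_slide' i n : factor p i n.+1 = rcons (factor p i n) (u p (i + n)).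
Proof. by rewrite -addn1 factor_split cats1 /factor /= addn0. Qed.

End Infra.

Section ZAlg.
Local Open Scope Z_scope.
Lemma reduceZ (n k : Z) : 1 <= n -> 0 <= k <= n -> exists g n' k',
  1 <= g /\ n = g*n' /\ k = g*k' /\ Z.gcd n' k' = 1 /\ 1 <= n' /\ 0 <= k' <= n'.
Proof.
move=> hn hk.
set g := Z.gcd n k.
have g0 : 0 <= g by apply: Z.gcd_nonneg.
have gn0 : g <> 0.
  move=> /Z.gcd_eq_0_l E; lia.
have [q Hq] := Z.gcd_divide_l n k.
have [r Hr] := Z.gcd_divide_r n k.
fold g in Hq, Hr.
exists g, q, r.
have H1 : Z.gcd (n / g) (k / g) = 1 by apply: Z.gcd_div_gcd.
rewrite Hq Hr !Z.div_mul // in H1.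
split; first lia. split; first lia. split; first lia. split => //.
nia.
Qed.

Lemma coprime_cube (a b : Z) : Z.gcd a b = 1 -> (a | b*b*b) -> a = 1 \/ a = -1.
Proof.
move=> hg hd.
have h1 : (a | b*b) by apply: (Z.gauss a b (b*b)) => //; rewrite Z.mul_assoc.
have h2 : (a | b) by apply: (Z.gauss a b b) => //.
have h3 : (a | Z.gcd a b) by apply: Z.gcd_greatest => //; apply: Z.divide_refl.
rewrite hg in h3. by apply: Z.divide_1_r.
Qed.

Lemma cube_pos g : 1 <= g -> g*g*g <> 0.
Proof. move=> h; nia. Qed.
Definition FL (P n k : Z) := (P-1)*(-(P-1)*n^3+(P-1)*n*n*k+2*n*k*k-k^3).



Lemma FL_nz P n k : 2 <= P -> 1 <= n -> 0 <= k <= n -> FL P n k <> 0.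
Proof.
move=> hP hn hk.
have [g [n' [k' [hg [En [Ek [hc [hn' hk']]]]]]]] := reduceZ hn hk.
subst n k; rewrite /FL => E.
set G := -(P-1)*n'^3+(P-1)*n'*n'*k'+2*n'*k'*k'-k'^3.
have E' : G = 0.
  have : (P-1)*(g*g*g)*G = 0 by rewrite -E /G; ring.
  move/Z.eq_mul_0 => [/Z.eq_mul_0 [|/cube_pos] //|//]; lia.
have hd : (n' | k'*k'*k').
  exists (-(P-1)*n'*n'+(P-1)*n'*k'+2*k'*k').
  transitivity (k'*k'*k' + G); first by rewrite E'; ring.
  rewrite /G; ring.
have [h1|h1] := coprime_cube hc hd; last lia.
subst n'.
have : k' = 0 \/ k' = 1 by lia.
case=> ?; subst k'; rewrite /G in E'; lia.
Qed.
Lemma fac_helper (m n' Q : Z) : 1 <= n' -> 1 <= Q -> Q = m*n' -> 1 <= m /\ n' <= Q /\ m <= Q.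
Proof.
move=> h1 h2 e.
have hm : 1 <= m.
  case: (Z.le_gt_cases 1 m) => // h.
  have : m*n' <= 0*n' by apply: Z.mul_le_mono_nonneg_r; lia.
  lia.
have a : 1*n' <= m*n' by apply: Z.mul_le_mono_nonneg_r; lia.
have b : m*1 <= m*n' by apply: Z.mul_le_mono_nonneg_l; lia.
lia.
Qed.

Definition FS (P n k : Z) := n^3-(P+3)*n*n*k+(2*P+2)*n*k*k-(P-1)*k^3.
Definition FM (P n k : Z) := -n^3+(P*P+P+2)*n*n*k-(P+3)*n*k*k-(P-1)*k^3.

Lemma FS_nz P n k : 2 <= P -> 1 <= n -> 0 <= k <= n -> FS P n k <> 0.
Proof.
move=> hP hn hk.
have [g [n' [k' [hg [En [Ek [hc [hn' hk']]]]]]]] := reduceZ hn hk.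
subst n k; rewrite /FS => E.
set G := n'^3-(P+3)*n'*n'*k'+(2*P+2)*n'*k'*k'-(P-1)*k'^3.
have E' : G = 0.
  have : (g*g*g)*G = 0 by rewrite -E /G; ring.
  move/Z.eq_mul_0 => [/cube_pos|//] //; lia.
have hd : (k' | n'*n'*n').
  exists ((P+3)*n'*n'-(2*P+2)*n'*k'+(P-1)*k'*k').
  transitivity (n'*n'*n' - G); first by rewrite E'; ring.
  rewrite /G; ring.
have hc' : Z.gcd k' n' = 1 by rewrite Z.gcd_comm.
have [h1|h1] := coprime_cube hc' hd; last lia.
subst k'.
have hd2 : (n' | P-1).
  exists (n'*n' - (P+3)*n' + 2*P+2).
  transitivity (P - 1 + G); first by rewrite E'; ring.
  rewrite /G; ring.
have [m Hm] := hd2.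
have hQ : 1 <= P - 1 by lia.
have [hm [hnP0 hmP0]] := fac_helper hn' hQ Hm.
have HP : P = m*n' + 1 by lia.
have B : (1-m)*n'*n' + (2*m-4)*n' + 4 - m = 0.
  have : n' * ((1-m)*n'*n' + (2*m-4)*n' + 4 - m) = 0.
    rewrite -E' /G HP; ring.
  move/Z.eq_mul_0 => [|//]; lia.
have : m = 1 \/ m = 2 \/ 3 <= m by lia.
case=> [?|[?|hm3]]; first (subst m; lia).
  subst m. have : n' = 1 \/ 2 <= n' by lia. case=> ?; nia.
have : n' = 1 \/ n' = 2 \/ 3 <= n' by lia.
case=> [?|[?|hn3]]; try (subst n'; lia).
have t0 : 0 <= (m-1)*n' by apply: Z.mul_nonneg_nonneg; lia.
have H : (m-1)*n'*3 <= (m-1)*n'*n' by apply: Z.mul_le_mono_nonneg_l; lia.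
have H2 : 0 <= m*n' by apply: Z.mul_nonneg_nonneg; lia.
lia.
Qed.

Lemma FM_nz P n k : 2 <= P -> 1 <= n -> 0 <= k <= n -> FM P n k <> 0.
Proof.
move=> hP hn hk.
have [g [n' [k' [hg [En [Ek [hc [hn' hk']]]]]]]] := reduceZ hn hk.
subst n k; rewrite /FM => E.
set G := -n'^3+(P*P+P+2)*n'*n'*k'-(P+3)*n'*k'*k'-(P-1)*k'^3.
have E' : G = 0.
  have : (g*g*g)*G = 0 by rewrite -E /G; ring.
  move/Z.eq_mul_0 => [/cube_pos|//] //; lia.
have hd : (k' | n'*n'*n').
  exists ((P*P+P+2)*n'*n'-(P+3)*n'*k'-(P-1)*k'*k').
  transitivity (n'*n'*n' + G); first by rewrite E'; ring.
  rewrite /G; ring.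
have hc' : Z.gcd k' n' = 1 by rewrite Z.gcd_comm.
have [h1|h1] := coprime_cube hc' hd; last lia.
subst k'.
have hd2 : (n' | P-1).
  exists (-n'*n' + (P*P+P+2)*n' - (P+3)).
  transitivity (P - 1 + G); first by rewrite E'; ring.
  rewrite /G; ring.
have [m Hm] := hd2.
have hQ : 1 <= P - 1 by lia.
have [hm [hnP0 hmP0]] := fac_helper hn' hQ Hm.
have hnP : n' <= P - 1 by lia.
have hmP : m <= P - 1.
  have : m * 1 <= m * n' by apply: Z.mul_le_mono_nonneg_l; lia.
  lia.
have B : -n'*n' + (P*P+P+2)*n' - P - 3 - m = 0.
  have : n' * (-n'*n' + (P*P+P+2)*n' - P - 3 - m) = 0.
    have HP' : P = m*n' + 1 by lia. rewrite -E' /G HP'; ring.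
  move/Z.eq_mul_0 => [|//]; lia.
set X := P*P+P+2-n'.
have hX : P*P+3 <= X by rewrite /X; lia.
have hX0 : 0 <= P*P by apply: Z.mul_nonneg_nonneg; lia.
have h3 : 1 * X <= n' * X by apply: Z.mul_le_mono_nonneg_r; lia.
have h4 : -n'*n' + (P*P+P+2)*n' = n' * X by rewrite /X; ring.
have h5 : 1*1 <= (P-1)*(P-1) by apply: Z.mul_le_mono_nonneg; lia.
lia.
Qed.
End ZAlg.

Section Count.
Variable p : nat.
Hypothesis hp : (1 < p)%N.

Lemma count_phi_L w : count_mem L (phi p w) = (p * count_mem L w + p.-1 * count_mem M w)%N.
Proof.
elim: w => [|a w IH]; first by rewrite /= !muln0.
 rewrite phi_cons count_cat IH.
by case: a => /=; rewrite ?count_cat ?count_nseq /=; lia.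
Qed.
Lemma count_phi_S w : count_mem S (phi p w) = (count_mem L w + count_mem M w)%N.
Proof.
elim: w => // a w IH; rewrite phi_cons count_cat IH.
by case: a => /=; rewrite ?count_cat ?count_nseq /=; lia.
Qed.
Lemma count_phi_M w : count_mem M (phi p w) = count_mem S w.
Proof.
elim: w => // a w IH; rewrite phi_cons count_cat IH.
by case: a => /=; rewrite ?count_cat ?count_nseq /=; lia.
Qed.
Lemma size_counts w : size w = (count_mem L w + count_mem S w + count_mem M w)%N.
Proof. elim: w => // a w IH; case: a => /=; rewrite IH; set x := count_mem L w; set y := count_mem S w; set z := count_mem M w; lia. Qed.

Local Open Scope Z_scope.
Definition cz (c : letter) (w : seq letter) := Z.of_nat (count_mem c w).
Definition cvec (w : seq letter) : Z*Z*Z := (cz L w, cz S w, cz M w).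
Definition dot3 (a x : Z*Z*Z) := a.1.1*x.1.1 + a.1.2*x.1.2 + a.2*x.2.
Definition yA (y : Z*Z*Z) : Z*Z*Z :=
  (Z.of_nat p * y.1.1 + y.1.2, y.2, (Z.of_nat p - 1)*y.1.1 + y.1.2).

Lemma dot_phi y w : dot3 y (cvec (phi p w)) = dot3 (yA y) (cvec w).
Proof.
have hpm : Z.of_nat p.-1 = Z.of_nat p - 1 by case: p hp => // q _; rewrite Nat2Z.inj_succ /=; lia.
have eL : cz L (phi p w) = Z.of_nat p * cz L w + (Z.of_nat p - 1) * cz M w.
  rewrite /cz count_phi_L -hpm; lia.
have eS : cz S (phi p w) = cz L w + cz M w by rewrite /cz count_phi_S; lia.
have eM : cz M (phi p w) = cz S w by rewrite /cz count_phi_M.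
rewrite /dot3 /cvec /yA /= eL eS eM; ring.
Qed.

Definition yv (c : letter) (n k : Z) : Z*Z*Z :=
  match c with L => (n-k, -k, -k) | S => (-k, n-k, -k) | M => (-k, -k, n-k) end.

Lemma dot_yv c n k w : dot3 (yv c n k) (cvec w) = n * cz c w - k * Z.of_nat (size w).
Proof.
rewrite size_counts /dot3 /cvec /cz !Nat2Z.inj_add.
by case: c => /=; ring.
Qed.

Definition cross (a b : Z*Z*Z) : Z*Z*Z :=
  (a.1.2*b.2 - a.2*b.1.2, a.2*b.1.1 - a.1.1*b.2, a.1.1*b.1.2 - a.1.2*b.1.1).
Definition sum3 (a : Z*Z*Z) := a.1.1 + a.1.2 + a.2.
Definition det3 a b c := dot3 a (cross b c).

Lemma cramer a b c x : det3 a b c * sum3 x =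
  dot3 a x * sum3 (cross b c) + dot3 b x * sum3 (cross c a) + dot3 c x * sum3 (cross a b).
Proof.
case: a => [[a1 a2] a3]; case: b => [[b1 b2] b3]; case: c => [[c1 c2] c3];
case: x => [[x1 x2] x3]; rewrite /det3 /dot3 /cross /sum3 /=; ring.
Qed.

Lemma det_yv c n k : det3 (yv c n k) (yA (yv c n k)) (yA (yA (yv c n k))) =
  match c with L => FL (Z.of_nat p) n k | S => FS (Z.of_nat p) n k | M => FM (Z.of_nat p) n k end.
Proof. by case: c; rewrite /det3 /dot3 /cross /yA /yv /FL /FS /FM; cbn [fst snd]; ring. Qed.

Lemma det_yv_nz c n k : 1 <= n -> 0 <= k <= n -> det3 (yv c n k) (yA (yv c n k)) (yA (yA (yv c n k))) <> 0.
Proof.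
move=> hn hk; rewrite det_yv.
have hP : 2 <= Z.of_nat p by lia.
case: c; [exact: FL_nz | exact: FS_nz | exact: FM_nz].
Qed.

Lemma absbound B D0 D1 D2 a b c : Z.abs D0 <= B -> Z.abs D1 <= B -> Z.abs D2 <= B ->
  Z.abs (D0 * a + D1 * b + D2 * c) <= B * (Z.abs a + Z.abs b + Z.abs c).
Proof.
move=> h0 h1 h2.
have e : forall D x, Z.abs D <= B -> Z.abs (D * x) <= B * Z.abs x.
  move=> D x hD; rewrite Z.abs_mul; apply: Z.mul_le_mono_nonneg_r => //; lia.
have := e _ a h0; have := e _ b h1; have := e _ c h2.
have := Z.abs_triangle (D0*a + D1*b) (D2*c).
have := Z.abs_triangle (D0*a) (D1*b).
lia.
Qed.

Lemma disc c (n kk : nat) : (0 < n)%N ->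
  (forall i, count_mem c (factor p i n) = kk) ->
  forall l, Z.abs (Z.of_nat n * cz c (factor p 0 l) - Z.of_nat kk * Z.of_nat l) <= Z.of_nat n * Z.of_nat n.
Proof.
move=> hn hc.
have hk : (kk <= n)%N.
  rewrite -(hc 0%N); have {2}-> : n = size (factor p 0 n) by rewrite size_map size_iota.
  exact: count_size.
move=> l; elim: l {-2}l (leqnn l) => [|m IH] l hl.
  have -> : l = 0%N by lia.
  rewrite /cz /factor /=; lia.
case: (ltnP l n) => hln.
  have hs : (count_mem c (factor p 0 l) <= l)%N.
    have {2}-> : l = size (factor p 0 l) by rewrite size_map size_iota.
    exact: count_size.
  rewrite /cz.
  have : (Z.of_nat (count_mem c (factor p 0 l)) <= Z.of_nat l)%Z by lia.
  have : (Z.of_nat kk <= Z.of_nat n)%Z by lia.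
  have : (Z.of_nat l <= Z.of_nat n)%Z by lia.
  nia.
have E : l = ((l - n) + n)%N by rewrite subnK.
rewrite E /cz factor_split count_cat add0n hc.
have := IH (l - n)%N ltac:(lia).
rewrite /cz.
have -> : Z.of_nat (l - n + n) = Z.of_nat (l - n) + Z.of_nat n by lia.
rewrite Nat2Z.inj_add.
move=> H; apply: Z.le_trans H; apply: Z.eq_le_incl; f_equal; ring.
Qed.

End Count.

From Stdlib Require Import Classical_Prop.

Lemma size_factor p i n : size (factor p i n) = n.
Proof. by rewrite size_map size_iota. Qed.

Lemma letter_var p (hp : (1 < p)%N) c n : (0 < n)%N ->
  exists i j, count_mem c (factor p i n) <> count_mem c (factor p j n).
Proof.
move=> hn.
case: (classic (exists i j, count_mem c (factor p i n) <> count_mem c (factor p j n))) => // hnot.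
exfalso.
set kk := count_mem c (factor p 0 n).
have hc : forall i, count_mem c (factor p i n) = kk.
  move=> i; case: (classic (count_mem c (factor p i n) = kk)) => // h.
  by case: hnot; exists i, 0%N.
have hk : (kk <= n)%N.
  rewrite /kk; have {2}-> : n = size (factor p 0 n) by rewrite size_map size_iota.
  exact: count_size.
pose N := Z.of_nat n. pose K := Z.of_nat kk.
pose y := yv c N K.
pose s := (Z.abs (sum3 (cross (yA p y) (yA p (yA p y)))) + Z.abs (sum3 (cross (yA p (yA p y)) y))
          + Z.abs (sum3 (cross y (yA p y))))%Z.
pose j := (Z.to_nat (N*N*s) + 1)%N.
pose w0 := factor p 0 j.
pose w1 := phi p w0.
pose w2 := phi p w1.
have h1 : w1 = factor p 0 (size w1) by rewrite /w1 /w0 factor0_phi.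
have h2 : w2 = factor p 0 (size w2) by rewrite /w2 h1 factor0_phi.
have hd := disc hp hn hc.
have B0 : (Z.abs (dot3 y (cvec w0)) <= N * N)%Z.
  by rewrite /y (dot_yv hp) /w0 size_factor; apply: hd.
have B1 : (Z.abs (dot3 (yA p y) (cvec w0)) <= N * N)%Z.
  by rewrite -dot_phi // -/w1 h1 /y (dot_yv hp) size_factor; apply: hd.
have B2 : (Z.abs (dot3 (yA p (yA p y)) (cvec w0)) <= N * N)%Z.
  by rewrite -dot_phi // -/w1 -dot_phi // -/w2 h2 /y (dot_yv hp) size_factor; apply: hd.
have hsum : sum3 (cvec w0) = Z.of_nat j.
  rewrite /sum3 /cvec /cz; cbn [fst snd]; have := size_counts hp w0; rewrite {1}/w0 size_factor; lia.
have Cr := cramer y (yA p y) (yA p (yA p y)) (cvec w0).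
rewrite hsum in Cr.
have Ab := @absbound p hp (N*N) _ _ _ (sum3 (cross (yA p y) (yA p (yA p y)))) (sum3 (cross (yA p (yA p y)) y))
   (sum3 (cross y (yA p y))) B0 B1 B2.
rewrite -Cr -/s in Ab.
have hdet : det3 y (yA p y) (yA p (yA p y)) <> 0%Z.
  apply: (det_yv_nz hp) => //; rewrite /N /K; lia.
have hs0 : (0 <= s)%Z by rewrite /s; lia.
have hN0 : (0 <= N)%Z by rewrite /N; lia.
have hNN : (0 <= N * N * s)%Z.
  apply: Z.mul_nonneg_nonneg => //; apply: Z.mul_nonneg_nonneg => //.
have hj : (N * N * s < Z.of_nat j)%Z by rewrite /j Nat2Z.inj_add Z2Nat.id //; lia.
rewrite Z.abs_mul in Ab.
have hd1 : (1 <= Z.abs (det3 y (yA p y) (yA p (yA p y))))%Z by lia.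
have hjj : (1 * Z.abs (Z.of_nat j) <= Z.abs (det3 y (yA p y) (yA p (yA p y))) * Z.abs (Z.of_nat j))%Z.
  apply: Z.mul_le_mono_nonneg_r => //; lia.
have : Z.abs (Z.of_nat j) = Z.of_nat j by lia.
lia.
Qed.

Definition pc (c : letter) (t : nat * nat * nat) :=
  match c with L => t.1.1 | S => t.1.2 | M => t.2 end.
Lemma pc_parikh c w : pc c (parikh w) = count_mem c w.
Proof. by case: c. Qed.

Definition third (a b : letter) :=
  match a, b with
  | L, S | S, L => M | L, M | M, L => S | _, _ => L end.
Lemma third_ne a b : a <> b -> third a b <> a /\ third a b <> b.
Proof. by case: a; case: b. Qed.

Lemma parikh_finite p n : finite_set [set parikh (factor p i n) | i in [set: nat]].
Proof.
apply: (@sub_finite_set _ _ ((fun t : 'I_n.+1 * 'I_n.+1 * 'I_n.+1 => (val t.1.1, val t.1.2, val t.2)) @` setT)); last first.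
  apply: finite_image. exact: finite_finset.
move=> x [i _ <-].
have hs : size (factor p i n) = n by rewrite size_map size_iota.
have h1 : (count_mem L (factor p i n) < n.+1)%N by rewrite ltnS -{2}hs count_size.
have h2 : (count_mem S (factor p i n) < n.+1)%N by rewrite ltnS -{2}hs count_size.
have h3 : (count_mem M (factor p i n) < n.+1)%N by rewrite ltnS -{2}hs count_size.
by exists (Ordinal h1, Ordinal h2, Ordinal h3).
Qed.

Lemma card3 (T : choiceType) (a b c : T) : a != b -> a != c -> b != c -> #|` [fset a; b; c]%fset| = 3%N.
Proof.
move=> ab ac bc.
rewrite fsetUC cardfsU1 cardfs2 !inE ab (eq_sym c a) (negbTE ac) (eq_sym c b) (negbTE bc) //.
Qed.

Theorem proposition8p4 (p : nat) (hp : (1 < p)%N) (n : nat) (hn : (0 < n)%N) :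
  (3 <= abelian_complexity p n)%N.
Proof.
have [i1 [j1 hL]] := letter_var hp L hn.
have [i hi] : exists i, parikh (factor p i n) <> parikh (factor p i.+1 n).
  case: (classic (exists i, parikh (factor p i n) <> parikh (factor p i.+1 n))) => // hnot.
  exfalso.
  have all0 : forall m, parikh (factor p m n) = parikh (factor p 0 n).
    elim=> // m IH; rewrite -IH.
    case: (classic (parikh (factor p m.+1 n) = parikh (factor p m n))) => // h.
    by case: hnot; exists m => h'; apply: h; rewrite h'.
  apply: hL; by rewrite -!(pc_parikh L) !all0.
have slide : forall x, (count_mem x (factor p i n) + (u p (i + n) == x))%N =
    ((u p i == x) + count_mem x (factor p i.+1 n))%N.
  move=> x.
  have E := etrans (esym (factor_slide' p i n)) (factor_slide p i n).
  have := congr1 (count_mem x) E.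
  by rewrite -cats1 count_cat /= addn0.
have hab : u p i <> u p (i + n).
  move=> hab; apply: hi.
  have e : forall x, count_mem x (factor p i n) = count_mem x (factor p i.+1 n).
    move=> x; have := slide x; rewrite hab; lia.
  by rewrite /parikh !e.
set c := third (u p i) (u p (i + n)).
have [hca hcb] : c <> u p i /\ c <> u p (i + n) := third_ne hab.
have ec : count_mem c (factor p i n) = count_mem c (factor p i.+1 n).
  have := slide c.
  have -> : (u p (i + n) == c) = false by apply/eqP => h; apply: hcb.
  have -> : (u p i == c) = false by apply/eqP => h; apply: hca.
  by rewrite addn0.
have [i2 [j2 hc]] := letter_var hp c hn.
have [j3 hj3] : exists j3, count_mem c (factor p j3 n) <> count_mem c (factor p i n).
  case: (classic (count_mem c (factor p i2 n) = count_mem c (factor p i n))) => h.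
  - exists j2 => h'; apply: hc; by rewrite h h'.
  - by exists i2.
have fA := parikh_finite p n.
set v1 := parikh (factor p i n).
set v2 := parikh (factor p i.+1 n).
set v3 := parikh (factor p j3 n).
have d12 : v1 != v2 by apply/eqP.
have d13 : v1 != v3.
  apply/eqP => h; apply: hj3.
  by have := congr1 (pc c) h; rewrite /v1 /v3 !pc_parikh => <-.
have d23 : v2 != v3.
  apply/eqP => h; apply: hj3.
  have := congr1 (pc c) h; rewrite /v2 /v3 !pc_parikh => <-; by rewrite ec.
rewrite /abelian_complexity -(card3 d12 d13 d23).
apply: fsubset_leq_card.
apply/fsubsetP => x; rewrite !inE -orbA => /or3P [] /eqP ->; rewrite in_fset_set // inE.
- by exists i.
- by exists i.+1.
- by exists j3.
Qed.
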